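(* $\mathrm{LTL}\geq\mathrm{HS}_{\mathsf{lin}}$: for every $\mathrm{HS}$ formula $\psi$ there is an $\mathrm{LTL}$ formula $\varphi$ such that for every finite Kripke structure $K$, $K\models_{\mathsf{lin}}\psi$ iff $K\models\varphi$.
   Context: A Kripke structure over a finite set $\mathcal{AP}$ is $K=(\mathcal{AP},S,\delta,\mu,s_0)$ with states $S$, left-total $\delta\subseteq S\times S$, labelling $\mu:S\to2^{\mathcal{AP}}$, initial state $s_0$; finite if $S$ is finite. An infinite path is an infinite state sequence $\pi$ with $(\pi(i),\pi(i+1))\in\delta$; initial if $\pi(0)=s_0$. $\mathrm{HS}$ formulas: $\psi::=p\mid\neg\psi\mid\psi\wedge\psi\mid\langle X\rangle\psi$, $X$ ranging over the Allen relations $A,L,B,E,D,O$ and their inverses; under the non-strict semantics all modalities are definable from $\langle B\rangle,\langle E\rangle,\langle\bar B\rangle,\langle\bar E\rangle$. Trace-based semantics: for an infinite path $\pi$, intervals $[i,j]$ with $0\le i\le j$; $[i,j]\models p$ iff $p\in\mu(\pi(h))$ for all $i\le h\le j$; $[x,y]\models\langle B\rangle\psi$ iff $[x,z]\models\psi$ for some $x\le z<y$; $[x,y]\models\langle E\rangle\psi$ iff $[v,y]\models\psi$ for some $x<v\le y$; $[x,y]\models\langle\bar B\rangle\psi$ iff $[x,z]\models\psi$ for some $z>y$; $[x,y]\models\langle\bar E\rangle\psi$ iff $[v,y]\models\psi$ for some $v<x$. $K\models_{\mathsf{lin}}\psi$ iff for every initial infinite path $\pi$ and every $i\ge0$, $[0,i]\models\psi$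 in $\pi$. $\mathrm{LTL}$: $\varphi::=\top\mid p\mid\neg\varphi\mid\varphi\wedge\varphi\mid\mathsf X\varphi\mid\varphi\mathsf U\varphi$ with standard semantics over positions of infinite paths; $K\models\varphi$ iff $\pi,0\models\varphi$ for every initial infinite path $\pi$. *)

(* Defs.v *)
From mathcomp Require Import all_boot.
Set Implicit Arguments. Unset Strict Implicit. Unset Printing Implicit Defensive.

Record Kripke (AP : finType) := {
  kS : finType;
  kdelta : rel kS;
  ktotal : forall s : kS, exists t : kS, kdelta s t;
  kmu : kS -> {set AP};
  ks0 : kS
}.
Arguments kS {AP} k.
Arguments kdelta {AP} k.
Arguments ktotal {AP} k.
Arguments kmu {AP} k.
Arguments ks0 {AP} k.

Definition is_path (AP : finType) (K : Kripke AP) (pi : nat -> kS K) : Prop :=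
  forall i, kdelta K (pi i) (pi i.+1).

Definition is_initial_path (AP : finType) (K : Kripke AP) (pi : nat -> kS K) : Prop :=
  @is_path AP K pi /\ pi 0 = ks0 K.

(* Allen relations A, L, B, E, D, O and their inverses (suffix "i"). *)
Inductive allen := RA | RL | RB | RE | RD | RO | RAi | RLi | RBi | REi | RDi | ROi.

Inductive hs (AP : Type) :=
  | HSProp of AP
  | HSNot of hs AP
  | HSAnd of hs AP & hs AP
  | HSDia of allen & hs AP.

(* non-strict trace-based semantics of HS on an interval [x,y] (x <= y)
   of the trace lab (lab h = label of the h-th state of the path) *)
Fixpoint hs_sat (AP : finType) (lab : nat -> {set AP}) (x y : nat) (f : hs AP) : Prop :=
  match f with
  | HSProp p => forall h, x <= h <= y -> p \in lab h
  | HSNot g => ~ hs_sat lab x y g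
  | HSAnd g1 g2 => hs_sat lab x y g1 /\ hs_sat lab x y g2
  | HSDia X g =>
    match X with
    | RA  => exists v, y <= v /\ hs_sat lab y v g
    | RL  => exists z v, y < z /\ z <= v /\ hs_sat lab z v g
    | RB  => exists z, x <= z /\ z < y /\ hs_sat lab x z g
    | RE  => exists v, x < v /\ v <= y /\ hs_sat lab v y g
    | RD  => exists v z, x < v /\ v <= z /\ z < y /\ hs_sat lab v z g
    | RO  => exists v z, x < v /\ v <= y /\ y < z /\ hs_sat lab v z g
    | RAi => exists v, v <= x /\ hs_sat lab v x g
    | RLi => exists v z, v <= z /\ z < x /\ hs_sat lab v z g
    | RBi => exists z, y < z /\ hs_sat lab x z g
    | REi => exists v, v < x /\ hs_sat lab v y g
    | RDi => exists v z, v < x /\ y < z /\ hs_sat lab v z g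
    | ROi => exists v z, v < x /\ x <= z /\ z < y /\ hs_sat lab v z g
    end
  end.

Definition hs_models_lin (AP : finType) (K : Kripke AP) (psi : hs AP) : Prop :=
  forall pi : nat -> kS K, @is_initial_path AP K pi ->
    forall i, hs_sat (fun h => kmu K (pi h)) 0 i psi.

Inductive ltl (AP : Type) :=
  | LTrue
  | LProp of AP
  | LNot of ltl AP
  | LAnd of ltl AP & ltl AP
  | LNext of ltl AP
  | LUntil of ltl AP & ltl AP.

Fixpoint ltl_sat (AP : finType) (lab : nat -> {set AP}) (i : nat) (f : ltl AP) : Prop :=
  match f with
  | LTrue => True
  | LProp p => p \in lab i
  | LNot g => ~ ltl_sat lab i g
  | LAnd g1 g2 => ltl_sat lab i g1 /\ ltl_sat lab i g2
  | LNext g => ltl_sat lab i.+1 g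
  | LUntil g1 g2 => exists k, i <= k /\ ltl_sat lab k g2 /\
                      forall h, i <= h < k -> ltl_sat lab h g1
  end.

Definition ltl_models (AP : finType) (K : Kripke AP) (phi : ltl AP) : Prop :=
  forall pi : nat -> kS K, @is_initial_path AP K pi ->
    ltl_sat (fun h => kmu K (pi h)) 0 phi.

(* Main.v *)
Require Import Defs.
From mathcomp Require Import all_boot zify.
From Stdlib Require Import Classical.
From Stdlib Require List.
Set Implicit Arguments. Unset Strict Implicit. Unset Printing Implicit Defensive.

Inductive form (V : Type) :=
| FTrue | FAtom of V | FNot of form V | FAnd of form V & form V | FOr of form V & form V
| FOp of bool & form V & form V.
Arguments FTrue {V}.

Definition ltd (d : bool) (x y : nat) : bool := if d then (x < y)%N else (y < x)%N.
Definition led (d : bool) (x y : nat) : bool := if d then (x <= y)%N else (y <= x)%N.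

Definition gU (d : bool) (P Q : nat -> Prop) (t : nat) : Prop :=
  exists s, ltd d t s /\ P s /\ forall r, ltd d t r -> ltd d r s -> Q r.

Fixpoint sat (V : Type) (w : nat -> V -> Prop) (f : form V) : nat -> Prop :=
  match f with
  | FTrue => fun _ => True
  | FAtom a => fun t => w t a
  | FNot g => fun t => ~ sat w g t
  | FAnd g h => fun t => sat w g t /\ sat w h t
  | FOr g h => fun t => sat w g t \/ sat w h t
  | FOp d g h => gU d (sat w g) (sat w h)
  end.

Ltac ord := unfold led, ltd in *; repeat match goal with d : bool |- _ => destruct d end; simpl in *; lia.

Lemma gU_ext d (P Q P' Q' : nat -> Prop) t :
  (forall s, ltd d t s -> (P s <-> P' s)) -> (forall s, ltd d t s -> (Q s <-> Q' s)) ->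
  (gU d P Q t <-> gU d P' Q' t).
Proof.
move=> HP HQ; split=> -[s [ts [Ps Qs]]]; exists s; split=> //; split.
- by apply/HP.
- move=> r tr rs; apply/HQ => //; exact: Qs.
- by apply/HP.
- move=> r tr rs; apply/HQ => //; exact: Qs.
Qed.

Lemma nat_max (P : nat -> Prop) N : (exists u, (u < N)%N /\ P u) ->
  exists u, (u < N)%N /\ P u /\ forall v, (u < v)%N -> (v < N)%N -> ~ P v.
Proof.
elim: N => [|N IH] [u [uN Pu]]; first by [].
case: (classic (P N)) => PN.
  exists N; split => //; split => // v; lia.
have [u' [u'N [Pu' H]]] : exists u, (u < N)%N /\ P u /\ forall v, (u < v)%N -> (v < N)%N -> ~ P v.
  apply: IH; exists u; split => //.
  have : u <> N by move=> E; subst.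
  lia.
exists u'; split; first lia; split => // v h1 h2.
case: (v =P N) => [->//|ne]; apply: H => //; lia.
Qed.

Lemma nat_min (P : nat -> Prop) : (exists u, P u) ->
  exists u, P u /\ forall v, (v < u)%N -> ~ P v.
Proof.
move=> [u Pu].
elim: u {-2}u (leqnn u) Pu => [|n IH] u hu Pu.
  exists u; split => // v; lia.
case: (classic (exists v, (v < u)%N /\ P v)) => [[v [vu Pv]]|H].
  apply: (IH v) => //; lia.
exists u; split => // v vu Pv; apply: H; by exists v.
Qed.

Lemma ltd_max d (P : nat -> Prop) h : (exists u, ltd d u h /\ P u) ->
  exists u, ltd d u h /\ P u /\ forall v, ltd d u v -> ltd d v h -> ~ P v.
Proof.
case: d => /= H.
  exact: nat_max.
have [u [Pu Hm]] : exists u, ((h < u)%N /\ P u) /\ forall v, (v < u)%N -> ~ ((h < v)%N /\ P v).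
  apply: nat_min; case: H => u [hu Pu]; by exists u.
exists u; case: Pu => hu Pu; split => //; split => // v uv vh Pv.
apply: (Hm v uv); by split.
Qed.

Lemma ltd_tri d x y : ltd d x y \/ x = y \/ ltd d y x.
Proof. unfold ltd; destruct d; lia. Qed.

Definition Kp (a b : nat -> Prop) v := ~ a v /\ b v.

Definition mode d (a b : nat -> Prop) (m : Prop) t h :=
  (exists u, led d t u /\ ltd d u h /\ a u /\ forall v, ltd d u v -> ltd d v h -> Kp a b v) \/
  (m /\ forall v, led d t v -> ltd d v h -> Kp a b v).

Definition Since d (a b : nat -> Prop) h :=
  exists s, ltd d s h /\ a s /\ forall r, ltd d s r -> ltd d r h -> b r.

Lemma flipflop d a b t h : ltd d t h -> (Since d a b h <-> mode d a b (Since d a b t) t h).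
Proof.
move=> th; split.
- move=> [s [sh [As Bs]]].
  case: (classic (exists u, ltd d u h /\ (led d t u /\ a u))) => [Hex|Hno].
    have [u [uh [[tu au] Hmax]]] := ltd_max Hex.
    left; exists u; split => //; split => //; split => // v uv vh.
    have nav : ~ a v by move=> av; apply: (Hmax v uv vh); split => //; ord.
    split => //; apply: Bs => //.
    case: (ltd_tri d u s) => [us|[E|su]].
    + exfalso; apply: (Hmax s us sh); split => //; ord.
    + subst; done.
    + ord.
  right; split.
    have st : ltd d s t.
      case: (ltd_tri d s t) => [//|[E|ts]].
      - subst; exfalso; apply: Hno; exists t; split => //; split => //; ord.
      - exfalso; apply: Hno; exists s; split => //; split => //; ord.
    exists s; split => //; split => // r sr rt; apply: Bs => //; ord.
  move=> v tv vh; split.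
    move=> av; apply: Hno; exists v; by split.
  case: (ltd_tri d s v) => [sv|[E|vs]]; first exact: Bs.
    subst; exfalso; apply: Hno; exists v; by split.
  exfalso; apply: Hno; exists s; split => //; split => //; ord.
- move=> [[u [tu [uh [au Ku]]]]|[[s [st [As Bs]]] Kt]].
    exists u; split => //; split => // r ur rh; by case: (Ku r ur rh).
  exists s; split; first ord; split => // r sr rh.
  case: (ltd_tri d r t) => [rt|[E|tr]]; first exact: Bs.
    subst; by case: (Kt t (ltac:(ord)) rh).
  by case: (Kt r (ltac:(ord)) rh).
Qed.

Lemma mode_ext d a b (m m' : Prop) t h : (m <-> m') -> (mode d a b m t h <-> mode d a b m' t h).
Proof. move=> E; rewrite /mode; tauto. Qed.

Lemma mode_comp d a b m t s h : ltd d t s -> ltd d s h ->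
  (mode d a b m t h <-> mode d a b (mode d a b m t s) s h).
Proof.
move=> ts sh; split.
- move=> [[u [tu [uh [au Ku]]]]|[mm Kt]].
    case: (ltd_tri d u s) => [us|[E|su]].
    + right; split.
        left; exists u; split => //; split => //; split => // v uv vs; apply: Ku => //; ord.
      move=> v sv vh; apply: Ku => //; ord.
    + subst; left; exists s; split; [ord|split => //].
    + left; exists u; split; [ord|split => //].
  right; split.
    right; split => // v tv vs; apply: Kt => //; ord.
  move=> v sv vh; apply: Kt => //; ord.
- move=> [[u [su [uh [au Ku]]]]|[[[u [tu [us [au Ku]]]]|[mm Kt]] Ks]].
    left; exists u; split; [ord|split => //].
  left; exists u; split => //; split; first ord; split => // v uv vh.
    case: (ltd_tri d v s) => [vs|[E|sv]]; first exact: Ku.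
      subst; apply: Ks => //; ord.
    apply: Ks => //; ord.
  right; split => // v tv vh.
  case: (ltd_tri d v s) => [vs|[E|sv]]; first exact: Kt.
    subst; apply: Ks => //; ord.
  apply: Ks => //; ord.
Qed.

Ltac splits := repeat match goal with |- _ /\ _ => split end; auto.

Lemma mode_allK d a b (m : Prop) t r : ltd d t r ->
  (forall v, led d t v -> ltd d v r -> Kp a b v) -> (mode d a b m t r <-> m).
Proof.
move=> tr Kall; split.
- case=> [[u [tu [ur [au _]]]]|[]] //.
  by case: (Kall u tu ur).
- move=> mm; right; by split.
Qed.

Lemma mode_on d a b (m : Prop) t u r : led d t u -> ltd d u r -> a u ->
  (forall v, ltd d u v -> ltd d v r -> Kp a b v) -> mode d a b m t r.
Proof. move=> tu ur au Ku; left; exists u; split => //; split => //; split => //. Qed.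

Lemma mode_off d a b (m : Prop) t u r : led d t u -> ltd d u r -> ~ a u -> ~ Kp a b u ->
  (forall v, ltd d u v -> ltd d v r -> Kp a b v) -> ~ mode d a b m t r.
Proof.
move=> tu ur nau nKu Ku [[u' [tu' [u'r [au' Ku']]]]|[_ Kall]].
- case: (ltd_tri d u' u) => [u'u|[E|uu']].
  + by apply: nKu; apply: Ku'.
  + by subst.
  + by case: (Ku u' uu' u'r).
- by apply: nKu; apply: Kall.
Qed.

Lemma selm (M : Prop) (m : bool) (X1 X0 : Prop) : (M <-> m) ->
  ((M /\ X1) \/ (~ M /\ X0) <-> (if m then X1 else X0)).
Proof. case: m => /= E; [have HM : M by apply/E | have HM : ~ M by move=> /E]; tauto. Qed.

Lemma core_nice d (a b P1 P0 Q1 Q0 : nat -> Prop) (m : bool) t :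
  gU d (fun s => (mode d a b m t s /\ P1 s) \/ (~ mode d a b m t s /\ P0 s))
       (fun r => (mode d a b m t r /\ Q1 r) \/ (~ mode d a b m t r /\ Q0 r)) t <->
  (Kp a b t /\ gU d (if m then P1 else P0) (fun r => (if m then Q1 else Q0) r /\ Kp a b r) t) \/
  ((~ Kp a b t \/ ~ gU d (fun r => ~ (if m then Q1 else Q0) r) (Kp a b) t) /\
   exists L, led d t L /\ (~ Kp a b L /\ ((a L /\ gU d P1 (fun r => Q1 r /\ Kp a b r) L) \/
        ((~ a L /\ ~ b L) /\ gU d P0 (fun r => Q0 r /\ Kp a b r) L))) /\
   forall u, led d t u -> ltd d u L -> (Kp a b u \/
      ((~ a u \/ ~ gU d (fun r => ~ Q1 r) (Kp a b) u) /\
       (~ (~ a u /\ ~ b u) \/ ~ gU d (fun r => ~ Q0 r) (Kp a b) u)))).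
Proof.
set M := mode d a b m t.
have selP : forall r (M0 : Prop) (X1 X0 : nat -> Prop), (M0 <-> m) ->
   ((M0 /\ X1 r) \/ (~ M0 /\ X0 r) <-> (if m then X1 else X0) r).
  move=> r M0 X1 X0 E; rewrite (selm _ _ E); clear; by case: m.
split.
- move=> [s [ts [PMs QMs]]].
  case: (classic (exists v, ltd d v s /\ (led d t v /\ ~ Kp a b v))) => [Hex|Hno].
  + right. have [L [Ls [[tL nKL] Hmax]]] := ltd_max Hex.
    have KLs : forall v, ltd d L v -> ltd d v s -> Kp a b v.
      move=> v Lv vs; apply: NNPP => nK; apply: (Hmax v Lv vs); split => //; ord.
    split.
      case: (classic (Kp a b t)) => Kt; [right|by left].
      move=> [r [tr [nQ Kb]]].
      have tL' : ltd d t L.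
        case: (ltd_tri d t L) => [//|[E|Lt]]; first by subst.
        exfalso; ord.
      have nLr : ~ ltd d L r by move=> Lr; apply: nKL; exact: Kb.
      have rs : ltd d r s by ord.
      have := QMs r tr rs.
      rewrite (selP r (M r) Q1 Q0) //.
      apply: mode_allK => // v tv vr.
      case: (ltd_tri d t v) => [tv'|[E|vt]]; [exact: Kb|by subst|exfalso; ord].
    exists L; split => //; split.
      split => //.
      case: (classic (a L)) => aL.
        left; split => //; exists s; split => //; split.
          have HM : M s by apply: mode_on tL Ls aL KLs.
          by case: PMs => -[].
        move=> r Lr rs; split; last exact: KLs.
        have tr : ltd d t r by ord.
        have HM : M r by apply: mode_on tL Lr aL _ => v Lv vr; apply: KLs => //; ord.
        by case: (QMs r tr rs) => -[].
      have nbL : ~ b L by move=> bL; apply: nKL.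
      right; split => //; exists s; split => //; split.
        have HM : ~ M s by apply: (mode_off tL Ls aL nKL KLs).
        by case: PMs => -[].
      move=> r Lr rs; split; last exact: KLs.
      have tr : ltd d t r by ord.
      have HM : ~ M r by apply: (mode_off tL Lr aL nKL _) => v Lv vr; apply: KLs => //; ord.
      by case: (QMs r tr rs) => -[].
    move=> u tu uL.
    case: (classic (Kp a b u)) => Ku; [by left|right].
    split.
      case: (classic (a u)) => au; [right|by left].
      move=> [r [ur [nQ Kb]]].
      have nLr : ~ ltd d L r by move=> Lr; apply: nKL; exact: Kb.
      have rs : ltd d r s by ord.
      have tr : ltd d t r by ord.
      have HM : M r by exact: mode_on tu ur au Kb.
      by case: (QMs r tr rs) => -[].
    case: (classic (a u)) => au; [by left; case|right].
    move=> [r [ur [nQ Kb]]].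
    have nLr : ~ ltd d L r by move=> Lr; apply: nKL; exact: Kb.
    have rs : ltd d r s by ord.
    have tr : ltd d t r by ord.
    have HM : ~ M r by exact: (mode_off tu ur au Ku Kb).
    by case: (QMs r tr rs) => -[].
  + left.
    have Kall : forall v, led d t v -> ltd d v s -> Kp a b v.
      move=> v tv vs; apply: NNPP => nK; apply: Hno; exists v; by splits.
    split; first by apply: Kall => //; ord.
    exists s; split => //; split.
      move: PMs; rewrite (selP s (M s) P1 P0) //; exact: mode_allK.
    move=> r tr rs.
    have Kr : Kp a b r by apply: Kall => //; ord.
    split => //.
    move: (QMs r tr rs); rewrite (selP r (M r) Q1 Q0) //.
    apply: mode_allK => // v tv vr; apply: Kall => //; ord.
- case => [[Kt [s [ts [Pms Hb]]]]|[pre [L [tL [[nKL EL] HC]]]]].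
    have Kall : forall v, led d t v -> ltd d v s -> Kp a b v.
      move=> v tv vs; case: (ltd_tri d t v) => [tv'|[E|vt]].
      - by case: (Hb v tv' vs).
      - by subst.
      - exfalso; ord.
    exists s; split => //; split.
      rewrite (selP s (M s) P1 P0) //; exact: mode_allK.
    move=> r tr rs; rewrite (selP r (M r) Q1 Q0); first by case: (Hb r tr rs).
    apply: mode_allK => // v tv vr; apply: Kall => //; ord.
  have Hle : forall r, ltd d t r -> ~ ltd d L r ->
      (M r /\ Q1 r) \/ (~ M r /\ Q0 r).
    move=> r tr nLr.
    case: (classic (exists v, ltd d v r /\ (led d t v /\ ~ Kp a b v))) => [Hex|Hno].
      have [u [ur [[tu nKu] Hmax]]] := ltd_max Hex.
      have Ku : forall v, ltd d u v -> ltd d v r -> Kp a b v.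
        move=> v uv vr; apply: NNPP => nK; apply: (Hmax v uv vr); split => //; ord.
      have uL : ltd d u L by ord.
      case: (HC u tu uL) => [//|[C1 C2]].
      case: (classic (a u)) => au.
        left; split; first exact: mode_on tu ur au Ku.
        apply: NNPP => nQ; case: C1 => // C1; apply: C1; exists r; by splits.
      have nbu : ~ b u by move=> bu; apply: nKu.
      right; split; first exact: (mode_off tu ur au nKu Ku).
      apply: NNPP => nQ; case: C2 => C2; first by apply: C2.
      apply: C2; exists r; by splits.
    have Kall : forall v, led d t v -> ltd d v r -> Kp a b v.
      move=> v tv vr; apply: NNPP => nK; apply: Hno; exists v; by splits.
    have Kt : Kp a b t by apply: Kall => //; ord.
    rewrite (selP r (M r) Q1 Q0); last exact: mode_allK.
    apply: NNPP => nQ; case: pre => pre; first by [].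
    apply: pre; exists r; split => //; split => // v tv vr; apply: Kall => //; ord.
  case: EL => [[aL [s [Ls [P1s Hb]]]]|[[naL nbL] [s [Ls [P0s Hb]]]]].
    exists s; split; first ord; split.
      left; split => //; apply: mode_on tL Ls aL _ => v Lv vs; by case: (Hb v Lv vs).
    move=> r tr rs; case: (classic (ltd d L r)) => Lr; last exact: Hle.
    left; split; last by case: (Hb r Lr rs).
    apply: mode_on tL Lr aL _ => v Lv vr; case: (Hb v Lv _) => //; ord.
  exists s; split; first ord; split.
    right; split => //; apply: mode_off tL Ls naL nKL _ => v Lv vs; by case: (Hb v Lv vs).
  move=> r tr rs; case: (classic (ltd d L r)) => Lr; last exact: Hle.
  right; split; last by case: (Hb r Lr rs).
  apply: mode_off tL Lr naL nKL _ => v Lv vr; case: (Hb v Lv _) => //; ord.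
Qed.

Fixpoint atoms X (f : form X) : list X :=
  match f with
  | FTrue => nil
  | FAtom a => a :: nil
  | FNot g => atoms g
  | FAnd g h | FOr g h | FOp _ g h => List.app (atoms g) (atoms h)
  end.

Fixpoint pure X (d : bool) (f : form X) : bool :=
  match f with
  | FOp d' g h => (d' == d) && pure d g && pure d h
  | FNot g => pure d g
  | FAnd g h | FOr g h => pure d g && pure d h
  | _ => true
  end.

Fixpoint prop X (f : form X) : bool :=
  match f with
  | FOp _ _ _ => false
  | FNot g => prop g
  | FAnd g h | FOr g h => prop g && prop h
  | _ => true
  end.

Fixpoint dd X (f : form X) : nat :=
  match f with
  | FOp _ g h => (maxn (dd g) (dd h)).+1
  | FNot g => dd g
  | FAnd g h | FOr g h => maxn (dd g) (dd h)
  | _ => 0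
  end.

Definition chiOp X d (a b : X) (g0 g1 h0 h1 : form X) (m : bool) : form X :=
  let A := FAtom a in let B := FAtom b in
  let K := FAnd (FNot A) B in let R := FAnd (FNot A) (FNot B) in
  let Pm := if m then g1 else g0 in let Qm := if m then h1 else h0 in
  let C := FAnd (FOr (FNot A) (FNot (FOp d (FNot h1) K))) (FOr (FNot R) (FNot (FOp d (FNot h0) K))) in
  let E := FOr (FAnd A (FOp d g1 (FAnd h1 K))) (FAnd R (FOp d g0 (FAnd h0 K))) in
  let tgt := FAnd (FNot K) E in let hold := FOr K C in
  FOr (FAnd K (FOp d Pm (FAnd Qm K)))
      (FAnd (FOr (FNot K) (FNot (FOp d (FNot Qm) K))) (FOr tgt (FAnd hold (FOp d tgt hold)))).

Lemma uns_iff d (tgt hold : nat -> Prop) t :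
  (exists L, led d t L /\ tgt L /\ forall u, led d t u -> ltd d u L -> hold u) <->
  tgt t \/ (hold t /\ gU d tgt hold t).
Proof.
split.
- move=> [L [tL [tgL H]]].
  case: (ltd_tri d t L) => [tL'|[E|Lt]].
  + right; split; first by apply: H => //; ord.
    exists L; split => //; split => // r tr rL; apply: H => //; ord.
  + by subst; left.
  + exfalso; ord.
- case=> [tg|[ht [s [ts [tgs H]]]]].
    exists t; split; first ord; split => // u tu ut; exfalso; ord.
  exists s; split; first ord; split => // u tu us.
  case: (ltd_tri d t u) => [tu'|[E|ut]]; [exact: H|by subst|exfalso; ord].
Qed.

Lemma chi_sem X d (a b : X) (g0 g1 h0 h1 : form X) (m : bool) val t :
  sat val (chiOp d a b g0 g1 h0 h1 m) t <->
  let a' := fun r => val r a in let b' := fun r => val r b in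
  let P1 := sat val g1 in let P0 := sat val g0 in let Q1 := sat val h1 in let Q0 := sat val h0 in
  (Kp a' b' t /\ gU d (if m then P1 else P0) (fun r => (if m then Q1 else Q0) r /\ Kp a' b' r) t) \/
  ((~ Kp a' b' t \/ ~ gU d (fun r => ~ (if m then Q1 else Q0) r) (Kp a' b') t) /\
   exists L, led d t L /\ (~ Kp a' b' L /\ ((a' L /\ gU d P1 (fun r => Q1 r /\ Kp a' b' r) L) \/
        ((~ a' L /\ ~ b' L) /\ gU d P0 (fun r => Q0 r /\ Kp a' b' r) L))) /\
   forall u, led d t u -> ltd d u L -> (Kp a' b' u \/
      ((~ a' u \/ ~ gU d (fun r => ~ Q1 r) (Kp a' b') u) /\
       (~ (~ a' u /\ ~ b' u) \/ ~ gU d (fun r => ~ Q0 r) (Kp a' b') u)))).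
Proof.
by case: m; apply: or_iff_compat_l; apply: and_iff_compat_l; symmetry; apply: uns_iff.
Qed.

Lemma chi_pure X d (a b : X) g0 g1 h0 h1 m :
  pure d g0 -> pure d g1 -> pure d h0 -> pure d h1 -> pure d (chiOp d a b g0 g1 h0 h1 m).
Proof. by move=> p1 p2 p3 p4; case: m; rewrite /= !eqxx p1 p2 p3 p4. Qed.

Lemma chi_atoms X d (a b : X) g0 g1 h0 h1 m y :
  List.In y (atoms (chiOp d a b g0 g1 h0 h1 m)) ->
  y = a \/ y = b \/ List.In y (atoms g0) \/ List.In y (atoms g1) \/ List.In y (atoms h0) \/ List.In y (atoms h1).
Proof.
rewrite /chiOp; case: m; cbn [atoms]; rewrite !List.in_app_iff; cbn [List.In]; intuition subst; tauto.
Qed.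

Lemma Eprime d X (chi : form X) : pure d chi -> forall x a b : X, x <> a -> x <> b ->
  exists c0 c1, pure d c0 /\ pure d c1 /\
  (forall y, List.In y (atoms c0) \/ List.In y (atoms c1) ->
      (List.In y (atoms chi) /\ y <> x) \/ y = a \/ y = b) /\
  forall val t (m : bool), (val t x <-> m) ->
    (forall h, ltd d t h -> (val h x <-> mode d (fun r => val r a) (fun r => val r b) m t h)) ->
    (sat val chi t <-> sat val (if m then c1 else c0) t).
Proof.
move=> pc x a b xa xb; elim: chi pc.
- move=> _; exists FTrue, FTrue; do 3!split => //; first by move=> y [].
  by move=> val t [].
- move=> y _; case: (classic (y = x)) => [->|yx].
    exists (FNot FTrue), FTrue; do 3!split => //; first by move=> z /= [[]|[]].
    move=> val t m E _; case: m E => /= E.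
      split => // _; exact/E.
    split; first by move=> /E.
    by move=> H; exfalso; apply: H.
  exists (FAtom y), (FAtom y); do 3!split => //.
    move=> z /= [[<-|[]]|[<-|[]]]; left; split => //; by left.
  by move=> val t [].
- move=> g IH /= pg; have [c0 [c1 [p0 [p1 [At Sem]]]]] := IH pg.
  exists (FNot c0), (FNot c1); do 3!split => //.
  move=> val t m E H; have S := Sem val t m E H; case: m {E H} S => /= ->; tauto.
- move=> g IHg h IHh /= /andP[pg ph].
  have [c0 [c1 [p0 [p1 [At Sem]]]]] := IHg pg.
  have [e0 [e1 [q0 [q1 [At' Sem']]]]] := IHh ph.
  exists (FAnd c0 e0), (FAnd c1 e1); split; first by rewrite /= p0 q0.
  split; first by rewrite /= p1 q1.
  split.
    move=> y /=; rewrite !List.in_app_iff => H.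
    have [H1|H2] : (List.In y (atoms c0) \/ List.In y (atoms c1)) \/ (List.In y (atoms e0) \/ List.In y (atoms e1)) by tauto.
    - case: (At y H1) => [[? ?]|?]; [left; split => //; by left| by right].
    - case: (At' y H2) => [[? ?]|?]; [left; split => //; by right| by right].
  move=> val t m E H; have S := Sem val t m E H; have S' := Sem' val t m E H; case: m {E H} S S' => /= -> ->; tauto.
- move=> g IHg h IHh /= /andP[pg ph].
  have [c0 [c1 [p0 [p1 [At Sem]]]]] := IHg pg.
  have [e0 [e1 [q0 [q1 [At' Sem']]]]] := IHh ph.
  exists (FOr c0 e0), (FOr c1 e1); split; first by rewrite /= p0 q0.
  split; first by rewrite /= p1 q1.
  split.
    move=> y /=; rewrite !List.in_app_iff => H.
    have [H1|H2] : (List.In y (atoms c0) \/ List.In y (atoms c1)) \/ (List.In y (atoms e0) \/ List.In y (atoms e1)) by tauto.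
    - case: (At y H1) => [[? ?]|?]; [left; split => //; by left| by right].
    - case: (At' y H2) => [[? ?]|?]; [left; split => //; by right| by right].
  move=> val t m E H; have S := Sem val t m E H; have S' := Sem' val t m E H; case: m {E H} S S' => /= -> ->; tauto.
- move=> d' g IHg h IHh /= /andP[/andP[/eqP Ed pg] ph]; subst d'.
  have [c0 [c1 [p0 [p1 [At Sem]]]]] := IHg pg.
  have [e0 [e1 [q0 [q1 [At' Sem']]]]] := IHh ph.
  exists (chiOp d a b c0 c1 e0 e1 false), (chiOp d a b c0 c1 e0 e1 true).
  split; first exact: chi_pure.
  split; first exact: chi_pure.
  split.
    move=> y H.
    have {}H : List.In y (atoms (chiOp d a b c0 c1 e0 e1 false)) \/ List.In y (atoms (chiOp d a b c0 c1 e0 e1 true)) by [].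
    have H' : y = a \/ y = b \/ (List.In y (atoms c0) \/ List.In y (atoms c1)) \/ (List.In y (atoms e0) \/ List.In y (atoms e1)).
      case: H => H; have := chi_atoms H; tauto.
    rewrite /= List.in_app_iff.
    case: H' => [->|[->|[H1|H2]]]; [by right; left|by right; right| |].
    - case: (At y H1) => [[? ?]|?]; [left; split => //; by left| by right].
    - case: (At' y H2) => [[? ?]|?]; [left; split => //; by right| by right].
  move=> val t m E H.
  set a' := fun r => val r a; set b' := fun r => val r b.
  have step : forall s, ltd d t s ->
     (forall (c0 c1 : form X) (g : form X),
       (forall val t (m : bool), (val t x <-> m) ->
          (forall h, ltd d t h -> (val h x <-> mode d (fun r => val r a) (fun r => val r b) m t h)) ->
          (sat val g t <-> sat val (if m then c1 else c0) t)) ->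
       (sat val g s <-> (mode d a' b' m t s /\ sat val c1 s) \/ (~ mode d a' b' m t s /\ sat val c0 s))).
    move=> s ts c0' c1' g' Sg.
    case: (classic (mode d a' b' m t s)) => HM.
      rewrite (Sg val s true); first by tauto.
        by split => // _; apply: (proj2 (H s ts)).
      move=> h' sh; rewrite (H h' (ltac:(ord))) (mode_comp _ _ _ ts sh).
      by apply: mode_ext; split.
    rewrite (Sg val s false); first by tauto.
      by split => // /(proj1 (H s ts)).
    move=> h' sh; rewrite (H h' (ltac:(ord))) (mode_comp _ _ _ ts sh).
    by apply: mode_ext; split.
  rewrite /= (gU_ext (P' := fun s => (mode d a' b' m t s /\ sat val c1 s) \/ (~ mode d a' b' m t s /\ sat val c0 s))
                     (Q' := fun s => (mode d a' b' m t s /\ sat val e1 s) \/ (~ mode d a' b' m t s /\ sat val e0 s))).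
  - rewrite core_nice; case: m {E H step}; symmetry; exact: chi_sem.
  - move=> s ts; exact: step.
  - move=> s ts; exact: step.
Qed.

Fixpoint bind X Y (f : form X) (s : X -> form Y) : form Y :=
  match f with
  | FTrue => FTrue
  | FAtom a => s a
  | FNot g => FNot (bind g s)
  | FAnd g h => FAnd (bind g s) (bind h s)
  | FOr g h => FOr (bind g s) (bind h s)
  | FOp d g h => FOp d (bind g s) (bind h s)
  end.

Lemma sat_bind X Y (f : form X) (s : X -> form Y) w t :
  sat w (bind f s) t <-> sat (fun h a => sat w (s a) h) f t.
Proof.
elim: f t => //= [g IH|g IHg h IHh|g IHg h IHh|d g IHg h IHh] t.
- by rewrite IH.
- by rewrite IHg IHh.
- by rewrite IHg IHh.
- by apply: gU_ext => s' _; [apply: IHg|apply: IHh].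
Qed.

Lemma sat_ext X (f : form X) (w1 w2 : nat -> X -> Prop) :
  (forall h a, List.In a (atoms f) -> (w1 h a <-> w2 h a)) -> forall t, sat w1 f t <-> sat w2 f t.
Proof.
elim: f => //= [a|g IH|g IHg h IHh|g IHg h IHh|d g IHg h IHh] E t.
- by apply: E; left.
- by rewrite IH.
- rewrite IHg ?IHh // => h' a' H; apply: E; rewrite List.in_app_iff; tauto.
- rewrite IHg ?IHh // => h' a' H; apply: E; rewrite List.in_app_iff; tauto.
- apply: gU_ext => s' _; [apply: IHg|apply: IHh] => h' a' H; apply: E; rewrite List.in_app_iff; tauto.
Qed.

Lemma atoms_bind X Y (f : form X) (s : X -> form Y) y :
  List.In y (atoms (bind f s)) -> exists a, List.In a (atoms f) /\ List.In y (atoms (s a)).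
Proof.
elim: f => [|a|g IH|g IHg h IHh|g IHg h IHh|d g IHg h IHh] /=.
- by [].
- by move=> H; exists a; split => //; left.
- exact: IH.
- rewrite !List.in_app_iff => -[/IHg|/IHh] [a [H1 H2]]; exists a; split => //; rewrite List.in_app_iff; tauto.
- rewrite !List.in_app_iff => -[/IHg|/IHh] [a [H1 H2]]; exists a; split => //; rewrite List.in_app_iff; tauto.
- rewrite !List.in_app_iff => -[/IHg|/IHh] [a [H1 H2]]; exists a; split => //; rewrite List.in_app_iff; tauto.
Qed.

Lemma pure_bind X Y d (f : form X) (s : X -> form Y) :
  pure d f -> (forall a, List.In a (atoms f) -> pure d (s a)) -> pure d (bind f s).
Proof.
elim: f => [|a|g IH|g IHg h IHh|g IHg h IHh|d' g IHg h IHh] /=.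
- by [].
- by move=> _ H; apply: H; left.
- exact: IH.
- move=> /andP[pg ph] H; rewrite IHg ?IHh // => a Ha; apply: H; rewrite List.in_app_iff; tauto.
- move=> /andP[pg ph] H; rewrite IHg ?IHh // => a Ha; apply: H; rewrite List.in_app_iff; tauto.
- move=> /andP[/andP[-> pg] ph] H; rewrite IHg ?IHh // => a Ha; apply: H; rewrite List.in_app_iff; tauto.
Qed.

Lemma prop_pure X d (f : form X) : prop f -> pure d f.
Proof.
elim: f => [|a|g IH|g IHg h IHh|g IHg h IHh|d' g IHg h IHh] //=.
- by move=> /andP[/IHg -> /IHh ->].
- by move=> /andP[/IHg -> /IHh ->].
Qed.

Lemma prop_local X (f : form X) (w1 w2 : nat -> X -> Prop) t :
  prop f -> (forall a, w1 t a <-> w2 t a) -> (sat w1 f t <-> sat w2 f t).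
Proof.
move=> pf E; elim: f pf => [|a|g IH|g IHg h IHh|g IHg h IHh|d' g IHg h IHh] //=.
- by move=> /IH ->.
- by move=> /andP[/IHg -> /IHh ->].
- by move=> /andP[/IHg -> /IHh ->].
Qed.

Lemma dd0_prop X (f : form X) : dd f <= 0 -> prop f.
Proof.
elim: f => [|a|g IH|g IHg h IHh|g IHg h IHh|d' g IHg h IHh] //=.
- by rewrite geq_max => /andP[/IHg -> /IHh ->].
- by rewrite geq_max => /andP[/IHg -> /IHh ->].
Qed.

Fixpoint fsize X (f : form X) : nat :=
  match f with
  | FNot g => (fsize g).+1
  | FAnd g h | FOr g h | FOp _ g h => (fsize g + fsize h).+1
  | _ => 0
  end.

Lemma neq_subl X d (A B : form X) : A <> FOp d A B.
Proof. move=> E; have := f_equal (@fsize X) E => /=; lia. Qed.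
Lemma neq_subr X d (A B : form X) : B <> FOp d A B.
Proof. move=> E; have := f_equal (@fsize X) E => /=; lia. Qed.

Definition vw V (w : nat -> V -> Prop) := fun h (z : form V) => sat w z h.

Fixpoint top V (z : form V) : form (form V) :=
  match z with
  | FTrue => FTrue
  | FAtom v => FAtom (FAtom v)
  | FNot g => FNot (top g)
  | FAnd g h => FAnd (top g) (top h)
  | FOr g h => FOr (top g) (top h)
  | FOp d g h => FAtom (FOp d g h)
  end.

Lemma top_sem V (z : form V) w h : sat (vw w) (top z) h <-> sat w z h.
Proof.
elim: z h => [|a|g IH|g IHg h IHh|g IHg h IHh|d' g IHg h IHh] h' //=.
- by rewrite IH.
- by rewrite IHg IHh.
- by rewrite IHg IHh.
Qed.

Lemma top_prop V (z : form V) : prop (top z).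
Proof. by elim: z => [|a|g IH|g IHg h IHh|g IHg h IHh|d' g IHg h IHh] //=; rewrite IHg IHh. Qed.

Lemma top_atoms V e (z : form V) y : List.In y (atoms (top z)) -> pure e z ->
  pure e y /\ dd y <= dd z /\ (dd y = 0 \/ exists A B, y = FOp e A B).
Proof.
elim: z => [|v|g IH|g IHg h IHh|g IHg h IHh|d g IHg h IHh] /=.
- by [].
- by move=> [<-|[]] _ /=; split => //; split => //; left.
- exact: IH.
- rewrite List.in_app_iff => H /andP[pg ph].
  case: H => [/IHg|/IHh] H; [have [? [? ?]] := H pg| have [? [? ?]] := H ph]; (split; [done|split; [lia|done]]).
- rewrite List.in_app_iff => H /andP[pg ph].
  case: H => [/IHg|/IHh] H; [have [? [? ?]] := H pg| have [? [? ?]] := H ph]; (split; [done|split; [lia|done]]).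
- move=> [<-|[]] /andP[/andP[/eqP -> pg] ph]; split; first by rewrite /= eqxx pg ph.
  split => //; right; by exists g, h.
Qed.

Definition SepR V (chi : form (form V)) :=
  exists rho : form (form V), prop rho /\ (forall z, List.In z (atoms rho) -> pure true z \/ pure false z) /\
    forall w t, sat (vw w) chi t <-> sat (vw w) rho t.

Lemma SepR_base V d (chi : form (form V)) : pure d chi ->
  (forall z, List.In z (atoms chi) -> prop z) -> SepR chi.
Proof.
move=> pc Hp; exists (FAtom (bind chi (fun z => z))); split => //; split.
  move=> z [<-|[]]; case: d pc => pc; [left|right]; apply: pure_bind => // a Ha; exact/prop_pure/Hp.
move=> w t; rewrite /= /vw sat_bind; done.
Qed.

Lemma gU_since d P Q h : gU (~~ d) P Q h <-> Since d P Q h.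
Proof.
rewrite /gU /Since; have E : forall x y, ltd (~~ d) x y = ltd d y x by case: d.
split=> -[s [hs [Ps H]]]; exists s; rewrite E in hs *; split => //; split => // r r1 r2.
- by apply: H; rewrite E.
- by apply: H; move: r1 r2; rewrite !E.
Qed.

Definition Inv V d n (z : form V) := pure (~~d) z /\ (dd z <= n \/ exists A B, z = FOp (~~d) A B /\
   pure (~~d) A /\ pure (~~d) B /\ dd A <= n /\ dd B <= n).

Lemma pure_or V d (z : form V) : pure d z -> pure true z \/ pure false z.
Proof. by case: d; [left|right]. Qed.

Lemma Llemma V d n
  (IH : forall chi : form (form V), pure d chi -> (forall z, List.In z (atoms chi) -> pure (~~d) z /\ dd z <= n) -> SepR chi) :
  forall L (chi : form (form V)), pure d chi -> (forall z, List.In z (atoms chi) -> Inv d n z) ->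
    (forall z, List.In z (atoms chi) -> ~ dd z <= n -> List.In z L) -> SepR chi.
Proof.
elim=> [|z0 L IHL] chi pc Hinv Hbad.
  apply: IH pc _ => z Hz; case: (Hinv z Hz) => pz _; split => //; apply: NNPP => nd; exact: (Hbad z Hz nd).
case: (classic (List.In z0 (atoms chi) /\ ~ dd z0 <= n)) => [[Hin Hb]|Hno]; last first.
  apply: IHL pc Hinv _ => z Hz nd; case: (Hbad z Hz nd) => [E|//]; subst; exfalso; exact: Hno.
case: (Hinv z0 Hin) => pz0 [//|[A [B [E [pA [pB [dA dB]]]]]]]; subst z0.
have [c0 [c1 [p0 [p1 [At Sem]]]]] := Eprime pc (fun E => @neq_subl _ (~~d) A B (esym E)) (fun E => @neq_subr _ (~~d) A B (esym E)).
have HS : forall c, pure d c -> (forall y, List.In y (atoms c) -> List.In y (atoms c0) \/ List.In y (atoms c1)) -> SepR c.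
  move=> c pc' Hc; apply: IHL pc' _ _.
    move=> y /Hc /At [[Hy _]|[->|->]]; [exact: Hinv| |]; split => //; by left.
  move=> y Hy nd; case: (At y (Hc y Hy)) => [[Hy' ne]|[E|E]].
    by case: (Hbad y Hy' nd) => // E; exfalso; apply: ne.
  - by subst.
  - by subst.
have [r0 [pr0 [ar0 S0]]] := HS c0 p0 (fun y H => or_introl H).
have [r1 [pr1 [ar1 S1]]] := HS c1 p1 (fun y H => or_intror H).
exists (FOr (FAnd (FAtom (FOp (~~d) A B)) r1) (FAnd (FNot (FAtom (FOp (~~d) A B))) r0)).
split; first by rewrite /= pr0 pr1.
split.
  move=> z /=; rewrite !List.in_app_iff /=; case=> [<-|[Hz|[<-|Hz]]]; [exact: pure_or pz0|exact: ar1|exact: pure_or pz0|exact: ar0].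
move=> w t /=; rewrite -S0 -S1.
set val := vw w.
have Hval : forall h, val h (FOp (~~d) A B) <-> Since d (sat w A) (sat w B) h by move=> h; exact: gU_since.
case: (classic (val t (FOp (~~d) A B))) => H0.
  have := Sem val t true _ _; rewrite /= => ->; first tauto.
    by split.
  move=> h th; rewrite Hval (flipflop _ _ th); apply: mode_ext; rewrite -Hval; by split.
have := Sem val t false _ _; rewrite /= => ->; first tauto.
  by split.
move=> h th; rewrite Hval (flipflop _ _ th); apply: mode_ext; rewrite -Hval; by split.
Qed.

Lemma claim V d : forall n (chi : form (form V)), pure d chi ->
  (forall z, List.In z (atoms chi) -> pure (~~d) z /\ dd z <= n) -> SepR chi.
Proof.
elim=> [|n IH] chi pc Hz.
  apply: (SepR_base pc) => z /Hz [_ ?]; exact: dd0_prop.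
set chi1 := bind chi (@top V).
have E1 : forall w t, sat (vw w) chi1 t <-> sat (vw w) chi t.
  move=> w t; rewrite sat_bind; apply: sat_ext => h a _; exact: top_sem.
suff [rho [p [pa S]]] : SepR chi1 by exists rho; split => //; split => // w t; rewrite -E1; exact: S.
have pc1 : pure d chi1 by apply: pure_bind pc _ => a _; exact/prop_pure/top_prop.
apply: (Llemma IH (L := atoms chi1)) pc1 _ (fun z H _ => H).
move=> z Hz0; have [a [Ha Hz']] := atoms_bind Hz0.
have [pa da] := Hz a Ha.
have [pz [dz [dz0|[A [B E]]]]] := top_atoms Hz' pa.
  split => //; left; lia.
split => //; right; exists A, B; split => //.
subst z; move: pz dz => /= /andP[/andP[_ pA] pB] dz.
do !split => //; lia.
Qed.

Definition Sep V (phi : form V) :=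
  exists rho : form (form V), prop rho /\ (forall z, List.In z (atoms rho) -> pure true z \/ pure false z) /\
    forall w t, sat w phi t <-> sat (vw w) rho t.

Lemma list_bound X (l : list X) (g : X -> nat) : exists n, forall x, List.In x l -> g x <= n.
Proof.
elim: l => [|x l [n IH]]; first by exists 0.
exists (maxn (g x) n) => y /= [<-|/IH]; lia.
Qed.

Theorem separation V (phi : form V) : Sep phi.
Proof.
elim: phi => [|v|g IH|g IHg h IHh|g IHg h IHh|d g IHg h IHh].
- by exists FTrue.
- exists (FAtom (FAtom v)); split => //; split => // z [<-|[]]; by left.
- case: IH => [r [pr [ar S]]]; exists (FNot r); split => //; split => // w t /=; by rewrite S.
- case: IHg => [r [pr [ar S]]]; case: IHh => [r' [pr' [ar' S']]].
  exists (FAnd r r'); split; first by rewrite /= pr pr'.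
  split; last by move=> w t /=; rewrite S S'.
  by move=> z /=; rewrite List.in_app_iff => -[/ar|/ar'].
- case: IHg => [r [pr [ar S]]]; case: IHh => [r' [pr' [ar' S']]].
  exists (FOr r r'); split; first by rewrite /= pr pr'.
  split; last by move=> w t /=; rewrite S S'.
  by move=> z /=; rewrite List.in_app_iff => -[/ar|/ar'].
- case: IHg => [r [pr [ar S]]]; case: IHh => [r' [pr' [ar' S']]].
  pose lift (z : form V) : form (form V) := bind z (fun v => FAtom (FAtom v)).
  pose f (z : form V) := if pure (~~d) z then FAtom z else lift z.
  have fsem : forall w z h0, sat (vw w) (f z) h0 <-> sat w z h0.
    move=> w z h0; rewrite /f; case: (pure (~~d) z) => //.
    by rewrite /lift sat_bind.
  have fpure : forall z, pure true z \/ pure false z -> pure d (f z).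
    move=> z Hz; rewrite /f; case E: (pure (~~d) z) => //.
    apply: pure_bind => //.
    by move: E Hz; clear; case: d => /= ->; case.
  have fatoms : forall z y, List.In y (atoms (f z)) -> pure (~~d) y.
    move=> z y; rewrite /f; case E: (pure (~~d) z) => /=; first by move=> [<-|[]].
    by move=> Hy; have [a [_ [<-|[]]]] := atoms_bind Hy.
  set chi := FOp d (bind r f) (bind r' f).
  have pc : pure d chi.
    by rewrite /= eqxx /= (pure_bind (prop_pure d pr) (fun a Ha => fpure a (ar a Ha))) (pure_bind (prop_pure d pr') (fun a Ha => fpure a (ar' a Ha))).
  have [n Hn] := list_bound (atoms chi) (@dd V).
  have Hat : forall z, List.In z (atoms chi) -> pure (~~d) z /\ dd z <= n.
    move=> z Hz; split; last exact: Hn.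
    case: (List.in_app_or _ _ _ Hz) => {}Hz; have [a [_ Hy]] := atoms_bind Hz; exact: fatoms Hy.
  have [rho [prho [arho Srho]]] := claim (n := n) pc Hat.
  exists rho; split => //; split => // w t; rewrite -Srho /=.
  apply: gU_ext => s _; rewrite sat_bind ?S ?S'; apply: sat_ext => h' a _; symmetry; exact: fsem.
Qed.

Definition Fs V (f : form V) := FOp true f FTrue.
Definition Ps V (f : form V) := FOp false f FTrue.
Definition Fns V (f : form V) := FOr f (Fs f).
Definition Pns V (f : form V) := FOr f (Ps f).
Arguments Fs : simpl never.
Arguments Ps : simpl never.
Arguments Fns : simpl never.
Arguments Pns : simpl never.

Lemma prop_local' X (f : form X) (w1 w2 : nat -> X -> Prop) t :
  prop f -> (forall a, List.In a (atoms f) -> (w1 t a <-> w2 t a)) -> (sat w1 f t <-> sat w2 f t).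
Proof.
elim: f => [|a|g IH|g IHg h IHh|g IHg h IHh|d' g IHg h IHh] //= pf E.
- by apply: E; left.
- by rewrite IH.
- case/andP: pf => pg ph; rewrite IHg ?IHh // => a Ha; apply: E; rewrite List.in_app_iff; tauto.
- case/andP: pf => pg ph; rewrite IHg ?IHh // => a Ha; apply: E; rewrite List.in_app_iff; tauto.
Qed.

Lemma sat_Fs V w (f : form V) t : sat w (Fs f) t <-> exists s, (t < s)%N /\ sat w f s.
Proof. split => [[s [ts [fs _]]]|[s [ts fs]]]; exists s => //; by split. Qed.
Lemma sat_Ps V w (f : form V) t : sat w (Ps f) t <-> exists s, (s < t)%N /\ sat w f s.
Proof. split => [[s [ts [fs _]]]|[s [ts fs]]]; exists s => //; by split. Qed.
Lemma sat_Fns V w (f : form V) t : sat w (Fns f) t <-> exists s, (t <= s)%N /\ sat w f s.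
Proof.
rewrite /Fns; change (sat w f t \/ sat w (Fs f) t <-> exists s, (t <= s)%N /\ sat w f s); rewrite sat_Fs; split.
- by case=> [H|[s [ts H]]]; [exists t|exists s; split => //; lia].
- move=> [s [ts H]]; case: (ltnP t s) => h; [right; exists s|left; have -> : t = s by lia]; done.
Qed.
Lemma sat_Pns V w (f : form V) t : sat w (Pns f) t <-> exists s, (s <= t)%N /\ sat w f s.
Proof.
rewrite /Pns; change (sat w f t \/ sat w (Ps f) t <-> exists s, (s <= t)%N /\ sat w f s); rewrite sat_Ps; split.
- by case=> [H|[s [ts H]]]; [exists t|exists s; split => //; lia].
- move=> [s [ts H]]; case: (ltnP s t) => h; [right; exists s|left; have -> : t = s by lia]; done.
Qed.

Definition finit V : form V := FNot (Ps FTrue).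
Lemma sat_init V w t : sat w (@finit V) t <-> t = 0.
Proof. rewrite /finit; change (~ sat w (Ps FTrue) t <-> t = 0); rewrite sat_Ps; split => [H|-> [s [//]]]; case: t H => // t H; exfalso; apply: H; by exists 0. Qed.

Fixpoint elim_in (V : eqType) (q : V) (z : form V) : form V :=
  match z with
  | FTrue => FTrue
  | FAtom y => if y == q then FNot FTrue else FAtom y
  | FNot g => FNot (elim_in q g)
  | FAnd g h => FAnd (elim_in q g) (elim_in q h)
  | FOr g h => FOr (elim_in q g) (elim_in q h)
  | FOp d g h => FOp d (elim_in q g) (elim_in q h)
  end.

Fixpoint elim_top (V : eqType) (q : V) (z : form V) : form V :=
  match z with
  | FTrue => FTrue
  | FAtom y => if y == q then FTrue else FAtom y
  | FNot g => FNot (elim_top q g)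
  | FAnd g h => FAnd (elim_top q g) (elim_top q h)
  | FOr g h => FOr (elim_top q g) (elim_top q h)
  | FOp d g h => FOp d (elim_in q g) (elim_in q h)
  end.

Lemma elim_in_sem (V : eqType) (q : V) d (z : form V) w v : pure d z ->
  (forall h, w h q <-> h = v) -> forall h, ltd d v h -> (sat w z h <-> sat w (elim_in q z) h).
Proof.
move=> pz Hq; elim: z pz => [|y|g IH|g IHg h IHh|g IHg h IHh|d' g IHg h IHh] /= pz h' vh.
- by [].
- case: eqP => [->|//]; rewrite Hq; split => // E; subst; exfalso; ord.
- by rewrite IH.
- by case/andP: pz => pg ph; rewrite IHg ?IHh.
- by case/andP: pz => pg ph; rewrite IHg ?IHh.
- case/andP: pz => /andP[/eqP Ed pg] ph; subst d'.
  apply: gU_ext => s hs; [apply: IHg|apply: IHh] => //; ord.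
Qed.

Lemma elim_top_sem (V : eqType) (q : V) d (z : form V) w v : pure d z ->
  (forall h, w h q <-> h = v) -> (sat w z v <-> sat w (elim_top q z) v).
Proof.
move=> pz Hq; elim: z pz => [|y|g IH|g IHg h IHh|g IHg h IHh|d' g IHg h IHh] /= pz.
- by [].
- by case: eqP => [->|//]; rewrite Hq.
- by rewrite IH.
- by case/andP: pz => pg ph; rewrite IHg ?IHh.
- by case/andP: pz => pg ph; rewrite IHg ?IHh.
- case/andP: pz => /andP[/eqP Ed pg] ph; subst d'.
  apply: gU_ext => s hs; [apply: (elim_in_sem pg Hq)|apply: (elim_in_sem ph Hq)] => //.
Qed.

Lemma elim_in_atoms (V : eqType) (q : V) (z : form V) : ~ List.In q (atoms (elim_in q z)).
Proof.
elim: z => [|y|g IH|g IHg h IHh|g IHg h IHh|d' g IHg h IHh] /=; try by [].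
- by case: eqP => [_ []|ne [E|[]]]; apply: ne.
- by rewrite List.in_app_iff; case.
- by rewrite List.in_app_iff; case.
- by rewrite List.in_app_iff; case.
Qed.

Lemma elim_top_atoms (V : eqType) (q : V) (z : form V) : ~ List.In q (atoms (elim_top q z)).
Proof.
elim: z => [|y|g IH|g IHg h IHh|g IHg h IHh|d' g IHg h IHh] /=; try by [].
- by case: eqP => [_ []|ne [E|[]]]; apply: ne.
- by rewrite List.in_app_iff; case.
- by rewrite List.in_app_iff; case.
- by rewrite List.in_app_iff; case; apply: elim_in_atoms.
Qed.

Lemma mark_elim (V : eqType) (G : form V) (q : V) : exists D, ~ List.In q (atoms D) /\
  forall w v, (forall h, w h q <-> h = v) -> (sat w G 0 <-> sat w D v).
Proof.
set Th := FOr (FAnd (@finit V) G) (Ps (FAnd (@finit V) G)).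
have [rho [prho [arho Srho]]] := separation Th.
exists (bind rho (elim_top q)); split.
  move=> H; have [a [_ Ha]] := atoms_bind H; exact: elim_top_atoms Ha.
move=> w v Hq.
have ETh : sat w Th v <-> sat w G 0.
  rewrite /Th; change ((sat w (@finit V) v /\ sat w G v) \/ sat w (Ps (FAnd (@finit V) G)) v <-> sat w G 0).
  rewrite sat_Ps; split.
  - case=> [[H1 H2]|[s [_ H]]].
      by move: H1; rewrite sat_init => E; subst.
    have [H1 H2] : sat w (@finit V) s /\ sat w G s := H.
    by move: H1; rewrite sat_init => E; subst.
  - move=> HG; case: v {Hq} => [|v]; [left; rewrite sat_init|right; exists 0; split => //; split => //; rewrite sat_init] => //.
rewrite -ETh Srho sat_bind; apply: prop_local' => // z Hz.
by case: (arho z Hz) => pz; apply: elim_top_sem pz Hq.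
Qed.

Fixpoint cut0 V (z : form V) : form V :=
  match z with
  | FTrue => FTrue
  | FAtom y => FAtom y
  | FNot g => FNot (cut0 g)
  | FAnd g h => FAnd (cut0 g) (cut0 h)
  | FOr g h => FOr (cut0 g) (cut0 h)
  | FOp _ _ _ => FNot FTrue
  end.

Lemma cut0_sem V (z : form V) w : pure false z -> (sat w z 0 <-> sat w (cut0 z) 0).
Proof.
elim: z => [|y|g IH|g IHg h IHh|g IHg h IHh|d' g IHg h IHh] //= pz.
- by rewrite IH.
- by case/andP: pz => pg ph; rewrite IHg ?IHh.
- by case/andP: pz => pg ph; rewrite IHg ?IHh.
- case/andP: pz => /andP[/eqP -> _] _; split => // -[s [//]].
Qed.

Lemma cut0_prop V (z : form V) : prop (cut0 z).
Proof. by elim: z => [|y|g IH|g IHg h IHh|g IHg h IHh|d' g IHg h IHh] //=; rewrite IHg IHh. Qed.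

Lemma past0 V (G : form V) : exists G', pure true G' /\ forall w, sat w G 0 <-> sat w G' 0.
Proof.
have [rho [prho [arho Srho]]] := separation G.
pose f (z : form V) := if pure true z then z else cut0 z.
exists (bind rho f); split.
  apply: pure_bind; first exact: prop_pure.
  move=> z _; rewrite /f; case E: (pure true z) => //; exact: prop_pure (cut0_prop z).
move=> w; rewrite Srho sat_bind; apply: prop_local' => // z Hz.
rewrite /f /vw; case E: (pure true z) => //.
apply: cut0_sem; case: (arho z Hz) => //; by rewrite E.
Qed.

Definition atm (AP : finType) := option (option AP).

Definition val (AP : finType) (lab : nat -> {set AP}) (x y : nat) : nat -> atm AP -> Prop :=
  fun h a => match a with Some (Some p) => p \in lab h | Some None => h = x | None => h = y end.

Definition w0 (AP : finType) (lab : nat -> {set AP}) : nat -> atm AP -> Prop :=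
  fun h a => match a with Some (Some p) => p \in lab h | _ => False end.

Fixpoint tr (AP : finType) (f : form (atm AP)) : ltl AP :=
  match f with
  | FTrue => LTrue _
  | FAtom (Some (Some p)) => LProp p
  | FAtom _ => LNot (LTrue _)
  | FNot g => LNot (tr g)
  | FAnd g h => LAnd (tr g) (tr h)
  | FOr g h => LNot (LAnd (LNot (tr g)) (LNot (tr h)))
  | FOp _ g h => LNext (LUntil (tr h) (tr g))
  end.

Lemma tr_sem (AP : finType) (f : form (atm AP)) lab : pure true f ->
  forall t, sat (w0 lab) f t <-> ltl_sat lab t (tr f).
Proof.
elim: f => [|[[p|]|]|g IH|g IHg h IHh|g IHg h IHh|d' g IHg h IHh] //= pf t.
- by rewrite IH.
- by case/andP: pf => pg ph; rewrite IHg ?IHh.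
- by case/andP: pf => pg ph; rewrite IHg ?IHh //; tauto.
- case/andP: pf => /andP[/eqP -> pg] ph.
  split.
  + move=> [s [ts [gs H]]]; exists s; split => //; split; first by rewrite -IHg.
    move=> r /andP[r1 r2]; rewrite -IHh //; exact: H.
  + move=> [s [ts [gs H]]]; exists s; split => //; split; first by rewrite IHg.
    move=> r r1 r2; rewrite IHh //; apply: H; rewrite /ltd in r1 r2; by rewrite r1.
Qed.

Lemma xmove (AP : finType) (G rel : form (atm AP)) : exists G', forall lab x y,
  sat (val lab x y) G' 0 <-> exists x', sat (val lab x y) rel x' /\ sat (val lab x' y) G 0.
Proof.
have [D [nD HD]] := mark_elim G (Some None : atm AP).
exists (Fns (FAnd D rel)) => lab x y; rewrite sat_Fns.
have E : forall s, sat (val lab x y) D s <-> sat (val lab s y) G 0.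
  move=> s; rewrite (HD (val lab s y) s) //; apply: sat_ext => h [[p|]|] Ha; [exact: iff_refl|exfalso; exact: nD Ha|exact: iff_refl].
split.
- move=> [s [_ [Ds Rs]]]; exists s; split => //; by rewrite -E.
- move=> [s [Rs Gs]]; exists s; split => //; split => //; by rewrite E.
Qed.

Lemma ymove (AP : finType) (G rel : form (atm AP)) : exists G', forall lab x y,
  sat (val lab x y) G' 0 <-> exists y', sat (val lab x y) rel y' /\ sat (val lab x y') G 0.
Proof.
have [D [nD HD]] := mark_elim G (None : atm AP).
exists (Fns (FAnd D rel)) => lab x y; rewrite sat_Fns.
have E : forall s, sat (val lab x y) D s <-> sat (val lab x s) G 0.
  move=> s; rewrite (HD (val lab x s) s) //; apply: sat_ext => h [[p|]|] Ha; [exact: iff_refl|exact: iff_refl|exfalso; exact: nD Ha].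
split.
- move=> [s [_ [Ds Rs]]]; exists s; split => //; by rewrite -E.
- move=> [s [Rs Gs]]; exists s; split => //; split => //; by rewrite E.
Qed.

Definition MXf (AP : finType) : form (atm AP) := FAtom (Some None).
Definition MYf (AP : finType) : form (atm AP) := FAtom None.

Lemma rPs V w (A : form V) c p : (forall s, sat w A s <-> s = c) -> (sat w (Ps A) p <-> (c < p)%N).
Proof. move=> H; rewrite sat_Ps; split => [[s [sp /H <-]]//|cp]; exists c; split => //; exact/H. Qed.
Lemma rFs V w (A : form V) c p : (forall s, sat w A s <-> s = c) -> (sat w (Fs A) p <-> (p < c)%N).
Proof. move=> H; rewrite sat_Fs; split => [[s [sp /H <-]]//|cp]; exists c; split => //; exact/H. Qed.
Lemma rPns V w (A : form V) c p : (forall s, sat w A s <-> s = c) -> (sat w (Pns A) p <-> (c <= p)%N).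
Proof. move=> H; rewrite sat_Pns; split => [[s [sp /H <-]]//|cp]; exists c; split => //; exact/H. Qed.
Lemma rFns V w (A : form V) c p : (forall s, sat w A s <-> s = c) -> (sat w (Fns A) p <-> (p <= c)%N).
Proof. move=> H; rewrite sat_Fns; split => [[s [sp /H <-]]//|cp]; exists c; split => //; exact/H. Qed.

Lemma mX (AP : finType) lab x y s : sat (val lab x y) (@MXf AP) s <-> s = x. Proof. by []. Qed.
Lemma mY (AP : finType) lab x y s : sat (val lab x y) (@MYf AP) s <-> s = y. Proof. by []. Qed.

Lemma xmove1 (AP : finType) (G rel : form (atm AP)) (R : nat -> nat -> nat -> Prop) :
  (forall lab x y p, sat (val lab x y) rel p <-> R x y p) ->
  exists G', forall lab x y, sat (val lab x y) G' 0 <-> exists x', R x y x' /\ sat (val lab x' y) G 0.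
Proof.
move=> HR; have [G' H] := xmove G rel; exists G' => lab x y; rewrite H.
by split => -[x' [r g]]; exists x'; split => //; move: r; rewrite HR.
Qed.

Lemma ymove1 (AP : finType) (G rel : form (atm AP)) (R : nat -> nat -> nat -> Prop) :
  (forall lab x y p, sat (val lab x y) rel p <-> R x y p) ->
  exists G', forall lab x y, sat (val lab x y) G' 0 <-> exists y', R x y y' /\ sat (val lab x y') G 0.
Proof.
move=> HR; have [G' H] := ymove G rel; exists G' => lab x y; rewrite H.
by split => -[x' [r g]]; exists x'; split => //; move: r; rewrite HR.
Qed.

Lemma xymove (AP : finType) (G rel1 rel2 : form (atm AP)) (R1 R2 : nat -> nat -> nat -> Prop) :
  (forall lab x y p, sat (val lab x y) rel1 p <-> R1 x y p) ->
  (forall lab x y p, sat (val lab x y) rel2 p <-> R2 x y p) ->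
  exists G', forall lab x y, sat (val lab x y) G' 0 <->
     exists x' y', R1 x y x' /\ R2 x' y y' /\ sat (val lab x' y') G 0.
Proof.
move=> H1 H2; have [G1 E1] := ymove1 G H2; have [G2 E2] := xmove1 G1 H1.
exists G2 => lab x y; rewrite E2; split.
- by move=> [x' [r]]; rewrite E1 => -[y' [r' g]]; exists x', y'.
- by move=> [x' [y' [r [r' g]]]]; exists x'; split => //; rewrite E1; exists y'.
Qed.

Lemma yxmove (AP : finType) (G rel1 rel2 : form (atm AP)) (R1 R2 : nat -> nat -> nat -> Prop) :
  (forall lab x y p, sat (val lab x y) rel1 p <-> R1 x y p) ->
  (forall lab x y p, sat (val lab x y) rel2 p <-> R2 x y p) ->
  exists G', forall lab x y, sat (val lab x y) G' 0 <->
     exists y' x', R1 x y y' /\ R2 x y' x' /\ sat (val lab x' y') G 0.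
Proof.
move=> H1 H2; have [G1 E1] := xmove1 G H2; have [G2 E2] := ymove1 G1 H1.
exists G2 => lab x y; rewrite E2; split.
- by move=> [y' [r]]; rewrite E1 => -[x' [r' g]]; exists y', x'.
- by move=> [y' [x' [r [r' g]]]]; exists y'; split => //; rewrite E1; exists x'.
Qed.

Lemma sat_And V w (a b : form V) t : sat w (FAnd a b) t <-> sat w a t /\ sat w b t.
Proof. by []. Qed.

Ltac relsem := move=> ? ? ? ?; rewrite ?sat_And ?(rPs _ (mX _ _ _)) ?(rFs _ (mX _ _ _)) ?(rPns _ (mX _ _ _)) ?(rFns _ (mX _ _ _))
   ?(rPs _ (mY _ _ _)) ?(rFs _ (mY _ _ _)) ?(rPns _ (mY _ _ _)) ?(rFns _ (mY _ _ _)) ?mX ?mY; apply: iff_refl.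

Ltac fin IH := repeat match goal with |- _ /\ _ => split end;
  try (rewrite -IH; [assumption|lia]); try (rewrite IH; [assumption|lia]); try lia; try done.

Lemma hs_trans (AP : finType) (g : hs AP) : exists G : form (atm AP), forall lab x y, (x <= y)%N ->
  (hs_sat lab x y g <-> sat (val lab x y) G 0).
Proof.
elim: g => [p|g [G IH]|g1 [G1 IH1] g2 [G2 IH2]|X g [G IH]].
- set tgt : form (atm AP) := FAnd (FAtom (Some (Some p))) (@MYf AP).
  set hold : form (atm AP) := FAtom (Some (Some p)).
  exists (Fns (FAnd (@MXf AP) (FOr tgt (FAnd hold (FOp true tgt hold))))) => lab x y xy.
  rewrite sat_Fns; split.
  + move=> H; exists x; split => //; split; first by [].
    apply/(uns_iff true (sat (val lab x y) tgt) (sat (val lab x y) hold)).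
    exists y; split => //; split.
      split => //; apply: H; apply/andP; lia.
    move=> u xu uy; apply: H; rewrite /led /ltd in xu uy; apply/andP; lia.
  + move=> [s [_ [E U]]]; have Es : s = x := E; subst s.
    have [L [xL [[pL EL] Hu]]] := proj2 (uns_iff true (sat (val lab x y) tgt) (sat (val lab x y) hold) x) U.
    move: EL => /= EL; subst L.
    move=> h /andP[xh hy]; case: (ltnP h y) => hy'.
      apply: Hu => //.
    by have -> : h = y by lia.
- exists (FNot G) => lab x y xy /=; by rewrite IH.
- exists (FAnd G1 G2) => lab x y xy /=; by rewrite IH1 ?IH2.
- case: X.
  +
    have [G' H] := xymove G (rel1 := @MYf AP) (rel2 := Pns (@MXf AP))
       (R1 := fun x y p => p = y) (R2 := fun x y p => (x <= p)%N) (ltac:(relsem)) (ltac:(relsem)).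
    exists G' => lab x y xy; rewrite H; split.
    * move=> [v [yv Hg]]; exists y, v; fin IH.
    * move=> [x' [y' [-> [yv Hg]]]]; exists y'; fin IH.
  +
    have [G' H] := xymove G (rel1 := Ps (@MYf AP)) (rel2 := Pns (@MXf AP))
       (R1 := fun x y p => (y < p)%N) (R2 := fun x y p => (x <= p)%N) (ltac:(relsem)) (ltac:(relsem)).
    exists G' => lab x y xy; rewrite H; split.
    * move=> [z [v [yz [zv Hg]]]]; exists z, v; fin IH.
    * move=> [x' [y' [yx [xy' Hg]]]]; exists x', y'; fin IH.
  +
    have [G' H] := ymove1 G (rel := FAnd (Pns (@MXf AP)) (Fs (@MYf AP)))
       (R := fun x y p => (x <= p)%N /\ (p < y)%N) (ltac:(relsem)).
    exists G' => lab x y xy; rewrite H; split.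
    * move=> [z [xz [zy Hg]]]; exists z; fin IH.
    * move=> [z [[xz zy] Hg]]; exists z; fin IH.
  +
    have [G' H] := xmove1 G (rel := FAnd (Ps (@MXf AP)) (Fns (@MYf AP)))
       (R := fun x y p => (x < p)%N /\ (p <= y)%N) (ltac:(relsem)).
    exists G' => lab x y xy; rewrite H; split.
    * move=> [v [xv [vy Hg]]]; exists v; fin IH.
    * move=> [v [[xv vy] Hg]]; exists v; fin IH.
  +
    have [G' H] := yxmove G (rel1 := FAnd (Pns (@MXf AP)) (Fs (@MYf AP))) (rel2 := FAnd (Ps (@MXf AP)) (Fns (@MYf AP)))
       (R1 := fun x y p => (x <= p)%N /\ (p < y)%N) (R2 := fun x y p => (x < p)%N /\ (p <= y)%N) (ltac:(relsem)) (ltac:(relsem)).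
    exists G' => lab x y xy; rewrite H; split.
    * move=> [v [z [xv [vz [zy Hg]]]]]; exists z, v; fin IH.
    * move=> [z [v [[xz zy] [[xv vz] Hg]]]]; exists v, z; fin IH.
  +
    have [G' H] := xymove G (rel1 := FAnd (Ps (@MXf AP)) (Fns (@MYf AP))) (rel2 := Ps (@MYf AP))
       (R1 := fun x y p => (x < p)%N /\ (p <= y)%N) (R2 := fun x y p => (y < p)%N) (ltac:(relsem)) (ltac:(relsem)).
    exists G' => lab x y xy; rewrite H; split.
    * move=> [v [z [xv [vy [yz Hg]]]]]; exists v, z; fin IH.
    * move=> [v [z [[xv vy] [yz Hg]]]]; exists v, z; fin IH.
  +
    have [G' H] := yxmove G (rel1 := @MXf AP) (rel2 := Fns (@MYf AP))
       (R1 := fun x y p => p = x) (R2 := fun x y p => (p <= y)%N) (ltac:(relsem)) (ltac:(relsem)).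
    exists G' => lab x y xy; rewrite H; split.
    * move=> [v [vx Hg]]; exists x, v; fin IH.
    * move=> [y' [v [-> [vx Hg]]]]; exists v; fin IH.
  +
    have [G' H] := yxmove G (rel1 := Fs (@MXf AP)) (rel2 := Fns (@MYf AP))
       (R1 := fun x y p => (p < x)%N) (R2 := fun x y p => (p <= y)%N) (ltac:(relsem)) (ltac:(relsem)).
    exists G' => lab x y xy; rewrite H; split.
    * move=> [v [z [vz [zx Hg]]]]; exists z, v; fin IH.
    * move=> [z [v [zx [vz Hg]]]]; exists v, z; fin IH.
  +
    have [G' H] := ymove1 G (rel := Ps (@MYf AP)) (R := fun x y p => (y < p)%N) (ltac:(relsem)).
    exists G' => lab x y xy; rewrite H; split.
    * move=> [z [yz Hg]]; exists z; fin IH.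
    * move=> [z [yz Hg]]; exists z; fin IH.
  +
    have [G' H] := xmove1 G (rel := Fs (@MXf AP)) (R := fun x y p => (p < x)%N) (ltac:(relsem)).
    exists G' => lab x y xy; rewrite H; split.
    * move=> [v [vx Hg]]; exists v; fin IH.
    * move=> [v [vx Hg]]; exists v; fin IH.
  +
    have [G' H] := xymove G (rel1 := Fs (@MXf AP)) (rel2 := Ps (@MYf AP))
       (R1 := fun x y p => (p < x)%N) (R2 := fun x y p => (y < p)%N) (ltac:(relsem)) (ltac:(relsem)).
    exists G' => lab x y xy; rewrite H; split.
    * move=> [v [z [vx [yz Hg]]]]; exists v, z; fin IH.
    * move=> [v [z [vx [yz Hg]]]]; exists v, z; fin IH.
  +
    have [G' H] := yxmove G (rel1 := FAnd (Pns (@MXf AP)) (Fs (@MYf AP))) (rel2 := Fs (@MXf AP))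
       (R1 := fun x y p => (x <= p)%N /\ (p < y)%N) (R2 := fun x y p => (p < x)%N) (ltac:(relsem)) (ltac:(relsem)).
    exists G' => lab x y xy; rewrite H; split.
    * move=> [v [z [vx [xz [zy Hg]]]]]; exists z, v; fin IH.
    * move=> [z [v [[xz zy] [vx Hg]]]]; exists v, z; fin IH.
Qed.

Lemma word_equiv (AP : finType) (psi : hs AP) : exists phi : ltl AP, forall lab : nat -> {set AP},
  (forall i, hs_sat lab 0 i psi) <-> ltl_sat lab 0 phi.
Proof.
have [G HG] := hs_trans psi.
have [D1 [nD1 HD1]] := mark_elim G (None : atm AP).
set Th : form (atm AP) := FNot (Fns (FNot D1)).
pose f (a : atm AP) : form (atm AP) := match a with Some (Some p) => FAtom (Some (Some p)) | _ => @finit _ end.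
set Th2 := bind Th f.
have [G' [pG' HG']] := past0 Th2.
exists (tr G') => lab.
rewrite -tr_sem // -HG'.
have Eq : forall i, sat (val lab 0 i) D1 i <-> sat (val lab 0 0) D1 i.
  move=> i; apply: sat_ext => h [[p|]|] Ha; [exact: iff_refl|exact: iff_refl|exfalso; exact: nD1 Ha].
have S1 : (forall i, hs_sat lab 0 i psi) <-> forall i, sat (val lab 0 0) D1 i.
  split => H i.
  - by rewrite -Eq -(HD1 (val lab 0 i) i) // -HG.
  - by rewrite HG // (HD1 (val lab 0 i) i) // Eq.
rewrite S1.
have S2 : (forall i, sat (val lab 0 0) D1 i) <-> sat (val lab 0 0) Th 0.
  rewrite /Th; change ((forall i, sat (val lab 0 0) D1 i) <-> ~ sat (val lab 0 0) (Fns (FNot D1)) 0).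
  rewrite sat_Fns; split.
  - move=> H [s [_ Hs]]; exact: Hs (H s).
  - move=> H i; apply: NNPP => Hi; apply: H; exists i; split; [done|exact: Hi].
rewrite S2 /Th2 sat_bind.
apply: sat_ext => h [[p|]|] Ha; [exact: iff_refl| |]; rewrite /f sat_init; exact: iff_refl.
Qed.

Theorem theorem3p2 (AP : finType) (psi : hs AP) :
  exists phi : ltl AP, forall K : Kripke AP,
    hs_models_lin K psi <-> ltl_models K phi.
Proof.
have [phi Hphi] := word_equiv psi.
exists phi => K; rewrite /hs_models_lin /ltl_models; split.
- move=> H pi Hpi; rewrite -Hphi; exact: H.
- move=> H pi Hpi; rewrite Hphi; exact: H.
Qed.
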